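(* Let $k\ge2$ be even, $\alpha_1,\dots,\alpha_k$ positive integers and $G=C(\alpha_1,\dots,\alpha_k)$. Then all $k$ eigenvalues of the quotient matrix $Q_L$ are simple (pairwise distinct).
   Context: $C(\alpha_1,\dots,\alpha_k)$ is defined recursively by $C(\alpha_1)=\overline{K_{\alpha_1}}$ and $C(\alpha_1,\dots,\alpha_i)=\overline{C(\alpha_1,\dots,\alpha_{i-1})\cup K_{\alpha_i}}$ (disjoint union, then complement). $\pi_i$ is the set of $\alpha_i$ vertices introduced at step $i$; for $k$ even, $\pi_i$ is a clique for $i$ odd, independent for $i$ even, and for $i<j$ vertices of $\pi_i,\pi_j$ are adjacent iff $j$ is even. $L=D-A$ is the Laplacian and $Q_L$ the $k\times k$ matrix with $(Q_L)_{ij}=\sum_{v\in\pi_j}L_{uv}$ for any $u\in\pi_i$. *)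

(* Defs.v *)
From mathcomp Require Import all_boot all_order all_algebra all_field.
Set Implicit Arguments. Unset Strict Implicit. Unset Printing Implicit Defensive.
Import GRing.Theory Num.Theory.
Local Open Scope ring_scope.

(* Vertices of C(alpha_1,...,alpha_k): pairs (i, t) with i : 'I_k the (0-based)
   class index (paper's pi_{i+1}) and t : 'I_(alpha i). *)
Definition cvert (k : nat) (alpha : 'I_k -> nat) : finType :=
  {i : 'I_k & 'I_(alpha i)}.

(* Adjacency for k even (paper, 1-based): pi_i clique for i odd, independent
   for i even; for i < j, pi_i and pi_j adjacent iff j even.
   0-based: class i clique iff i even; for i < j adjacent iff j odd. *)
Definition cadj (k : nat) (alpha : 'I_k -> nat) (u v : cvert alpha) : bool :=
  (u != v) &&
  (if tag u == tag v then ~~ odd (tag u)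
   else odd (maxn (tag u) (tag v))).

Definition cdeg (k : nat) (alpha : 'I_k -> nat) (u : cvert alpha) : nat :=
  #|[set v | cadj u v]|.

Definition claplacian (k : nat) (alpha : 'I_k -> nat)
    (u v : cvert alpha) : algC :=
  (if u == v then (cdeg u)%:R else 0) - (if cadj u v then 1 else 0).

Definition QL (k : nat) (alpha : 'I_k -> nat) : 'M[algC]_k :=
  \matrix_(i < k, j < k)
    match [pick u : cvert alpha | tag u == i] with
    | Some u => \sum_(v : cvert alpha | tag v == j) claplacian u v
    | None => 0
    end.

(* Main.v *)
Require Import Defs.
From mathcomp Require Import all_boot all_order all_algebra all_field.
Import GRing.Theory Num.Theory.
Local Open Scope ring_scope.
Set Implicit Arguments. Unset Strict Implicit. Unset Printing Implicit Defensive.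

Lemma card_tag k (alpha : 'I_k -> nat) (j : 'I_k) :
  (\sum_(v : cvert alpha | tag v == j) 1 = alpha j)%N.
Proof.
have := @sig_big_dep nat 0%N addn 'I_k (fun i => 'I_(alpha i)) (fun i => i == j)
  (fun _ _ => true) (fun _ _ => 1%N).
rewrite big_pred1_eq sum1_card card_ord => ->.
under [RHS]eq_bigl do rewrite andbT.
done.
Qed.

Definition w k (alpha : 'I_k -> nat) (i j : 'I_k) : algC :=
  (odd (maxn i j))%:R * (alpha j)%:R.

Lemma QL_row k (alpha : 'I_k -> nat) (x : 'I_k -> algC) i :
  (0 < alpha i)%N ->
  \sum_j QL alpha i j * x j = \sum_j w alpha i j * (x i - x j).
Proof.
move=> ai.
rewrite /QL; under eq_bigr do rewrite mxE.
case: pickP => [u tu|none]; last first.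
  by have := none (Tagged (fun i => 'I_(alpha i)) (Ordinal ai)); rewrite /= eqxx.
pose N j := \sum_(v : cvert alpha | tag v == j) (if cadj u v then 1 else 0 : algC).
have S1 j : \sum_(v : cvert alpha | tag v == j) claplacian u v
    = (if j == i then (cdeg u)%:R else 0) - N j.
  rewrite /claplacian sumrB; congr (_ - _).
  case: (eqVneq j i) => [->|ne].
    rewrite (bigD1 u) //= eqxx big1 ?addr0 // => v /andP[_ nv].
    by rewrite eq_sym (negbTE nv).
  rewrite big1 // => v tv; case: eqP => // uv; rewrite -uv in tv.
  by rewrite (eqP tu) eq_sym (negbTE ne) in tv.
have S2 : (cdeg u)%:R = \sum_j N j.
  rewrite /cdeg -sum1_card natr_sum big_mkcond /=.
  rewrite (partition_big (fun v : cvert alpha => tag v) xpredT) //=.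
  apply: eq_bigr => j _; apply: eq_bigr => v _.
  by rewrite inE; case: cadj.
have S4 j : j != i -> N j = w alpha i j.
  move=> ne; rewrite /N /w.
  rewrite (eq_bigr (fun _ => (odd (maxn i j))%:R)) => [|v tv]; last first.
    have ne' : (i == j) = false by rewrite eq_sym (negbTE ne).
    rewrite /cadj (eqP tu) (eqP tv) ne'.
    have -> : (u != v) = true.
      apply/negP => /eqP uv; rewrite -uv (eqP tu) in tv.
      by rewrite eq_sym (negbTE ne) in tv.
    by case: odd.
  rewrite (eq_bigr (fun _ => (odd (maxn i j))%:R * 1)) => [|v _]; last by rewrite mulr1.
  rewrite -mulr_sumr.
  have -> : \sum_(v : cvert alpha | tag v == j) (1:algC) = (alpha j)%:R.
    by rewrite -card_tag natr_sum.
  done.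
under eq_bigr do rewrite S1.
transitivity (\sum_j N j * (x i - x j)).
  rewrite (eq_bigr (fun j : 'I_k => (if j == i then (cdeg u)%:R * x i else 0) - N j * x j)); last first.
    by move=> j _; rewrite mulrBl; case: eqP => [->|]; rewrite ?mul0r.
  rewrite sumrB -big_mkcond big_pred1_eq S2 mulr_suml -sumrB.
  by apply: eq_bigr => j _; rewrite mulrBr.
apply: eq_bigr => j _; case: (eqVneq j i) => [->|ne]; first by rewrite !subrr !mulr0.
by rewrite S4.
Qed.

From mathcomp Require Import ring.

Lemma split3 k (p : 'I_k) (F : 'I_k -> algC) :
  \sum_j F j = \sum_(j : 'I_k | (j < p)%N) F j + F p + \sum_(j : 'I_k | (p < j)%N) F j.
Proof.
rewrite (bigD1 p) //= (bigID (fun j : 'I_k => (j < p)%N)) /=.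
rewrite (eq_bigl (fun j : 'I_k => (j < p)%N)); last first.
  by move=> j; rewrite -(inj_eq val_inj) /=; case: ltngtP.
rewrite [X in _ + (_ + X)](eq_bigl (fun j : 'I_k => (p < j)%N)); last first.
  by move=> j; rewrite -(inj_eq val_inj) /=; case: ltngtP.
ring.
Qed.

Definition Asum k (alpha : 'I_k -> nat) (p : 'I_k) : algC :=
  \sum_(j : 'I_k | (j < p)%N) (alpha j)%:R.
Definition Osum k (alpha : 'I_k -> nat) (p : 'I_k) : algC :=
  \sum_(j : 'I_k | (p < j)%N) (odd j)%:R * (alpha j)%:R.
Definition lamC k (alpha : 'I_k -> nat) (p : 'I_k) : algC :=
  (odd p)%:R * (Asum alpha p + (alpha p)%:R) + Osum alpha p.
Definition xv k (alpha : 'I_k -> nat) (p j : 'I_k) : algC :=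
  if (j < p)%N then (alpha p)%:R else if j == p then - Asum alpha p else 0.

Lemma eig_eq k (alpha : 'I_k -> nat) (p i : 'I_k) :
  \sum_j w alpha i j * (xv alpha p i - xv alpha p j) = lamC alpha p * xv alpha p i.
Proof.
have xpp : xv alpha p p = - Asum alpha p by rewrite /xv ltnn eqxx.
have xlt (j : 'I_k) : (j < p)%N -> xv alpha p j = (alpha p)%:R by rewrite /xv => ->.
have xgt (j : 'I_k) : (p < j)%N -> xv alpha p j = 0.
  move=> h; rewrite /xv ltnNge ltnW //=.
  by case: eqP => // e; rewrite e ltnn in h.
rewrite (split3 p) /lamC.
case: (ltngtP i p) => h.
- rewrite big1 ?add0r => [|j hj]; last by rewrite xlt // xlt // subrr mulr0.
  rewrite (eq_bigr (fun j : 'I_k => ((alpha p)%:R) * ((odd j)%:R * (alpha j)%:R))) => [|j hj]; last first.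
    rewrite xlt // xgt // subr0 /w; move/maxn_idPr: (ltnW (ltn_trans h hj)) => ->; ring.
  rewrite -mulr_sumr xlt // xpp /w; move/maxn_idPr: (ltnW h) => ->.
  rewrite /Osum; ring.
- rewrite [X in _ + X]big1 ?addr0 => [|j hj]; last by rewrite xgt // xgt // subrr mulr0.
  rewrite (eq_bigr (fun j : 'I_k => (- (odd i)%:R * (alpha p)%:R) * (alpha j)%:R)) => [|j hj]; last first.
    rewrite xgt // xlt // /w; move/maxn_idPl: (ltnW (ltn_trans hj h)) => ->; ring.
  rewrite -mulr_sumr xgt // xpp /w; move/maxn_idPl: (ltnW h) => ->.
  rewrite /Asum; ring.
- have -> : i = p by apply: val_inj.
  rewrite subrr mulr0 addr0 xpp.
  rewrite (eq_bigr (fun j : 'I_k => ((odd p)%:R * (- Asum alpha p - (alpha p)%:R)) * (alpha j)%:R)) => [|j hj]; last first.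
    rewrite xlt // /w; move/maxn_idPl: (ltnW hj) => ->; ring.
  rewrite [X in _ + X](eq_bigr (fun j : 'I_k => (- Asum alpha p) * ((odd j)%:R * (alpha j)%:R))) => [|j hj]; last first.
    rewrite xgt // /w; move/maxn_idPr: (ltnW hj) => ->; ring.
  rewrite -!mulr_sumr /Osum /Asum; ring.
Qed.

Definition Pp (p j : nat) : bool :=
  if odd p then (j <= p)%N || odd j else (p < j)%N && odd j.
Definition lamN k (alpha : 'I_k -> nat) (p : 'I_k) : nat :=
  if val p == 0%N then 0%N else (\sum_(j : 'I_k | Pp p j) alpha j)%N.

Lemma lamN_C k (alpha : 'I_k -> nat) (p : 'I_k) :
  val p != 0%N -> (lamN alpha p)%:R = lamC alpha p.
Proof.
move=> p0; rewrite /lamN (negbTE p0) natr_sum big_mkcond (split3 p) /lamC /Asum /Osum /Pp.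
case: (boolP (odd p)) => op.
- rewrite leqnn /= (eq_bigr (fun j : 'I_k => (alpha j)%:R)) => [|j hj]; last by rewrite ltnW.
  rewrite [X in _ + X](eq_bigr (fun j : 'I_k => (odd j)%:R * (alpha j)%:R)) => [|j hj]; last first.
    by rewrite leqNgt hj /=; case: odd; rewrite ?mul1r ?mul0r.
  ring.
- rewrite ltnn /= big1 => [|j hj]; last by rewrite ltnNge ltnW.
  rewrite (eq_bigr (fun j : 'I_k => (odd j)%:R * (alpha j)%:R)) => [|j hj]; last first.
    by rewrite hj /=; case: odd; rewrite ?mul1r ?mul0r.
  ring.
Qed.

Lemma sum_strict k (P Q : pred 'I_k) (f : 'I_k -> nat) (j0 : 'I_k) :
  (forall j, P j -> Q j) -> Q j0 -> ~~ P j0 -> (0 < f j0)%N ->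
  (\sum_(j | P j) f j < \sum_(j | Q j) f j)%N.
Proof.
move=> PQ Qj0 Pj0 fj0.
rewrite [X in (_ < X)%N](bigID P) /=.
rewrite (eq_bigl P); last by move=> j; case: (boolP (P j)) => h; rewrite ?andbT ?andbF ?PQ.
rewrite -[X in (X < _)%N]addn0 ltn_add2l (bigD1 j0) /=; last by rewrite Qj0.
by apply: leq_trans fj0 (leq_addr _ _).
Qed.

Lemma lamN_inj k (alpha : 'I_k -> nat) :
  ~~ odd k -> (forall i, (0 < alpha i)%N) -> injective (lamN alpha).
Proof.
move=> ek apos.
have key (p q : 'I_k) : (p < q)%N -> lamN alpha p != lamN alpha q.
  move=> h.
  have k0 : (0 < k)%N by apply: leq_ltn_trans (ltn_ord q).
  pose o0 := Ordinal k0.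
  have q0 : (val q == 0%N) = false by apply/negbTE; rewrite -lt0n (leq_ltn_trans (leq0n p) h).
  have [p0|p0] := eqVneq (val p) 0%N.
    rewrite /lamN p0 q0 /= eq_sym neq_ltn; apply/orP; right.
    have sum_pos (j0 : 'I_k) : Pp q j0 -> (0 < \sum_(j : 'I_k | Pp q j) alpha j)%N.
      by move=> hj; rewrite (bigD1 j0) //= ltn_addr.
    case: (boolP (odd q)) => oq.
      by apply: (sum_pos o0); rewrite /Pp oq.
    have qk : (q.+1 < k)%N.
      rewrite ltn_neqAle ltn_ord andbT; apply/eqP => e.
      by move: ek; rewrite -e /= oq.
    by apply: (sum_pos (Ordinal qk)); rewrite /Pp (negbTE oq) /= leqnn oq.
  rewrite /lamN (negbTE p0) q0 neq_ltn.
  have pk : (p.+1 < k)%N by apply: leq_ltn_trans (ltn_ord q).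
  case: (boolP (odd p)) => op; case: (boolP (odd q)) => oq.
  - apply/orP; left; apply: (sum_strict (j0 := Ordinal pk)) => /=.
    + by move=> j; rewrite /Pp op oq => /orP[hj|->]; rewrite ?orbT // (leq_trans hj (ltnW h)).
    + by rewrite /Pp oq h.
    + by rewrite /Pp op ltnn /= op.
    + exact: apos.
  - apply/orP; right; apply: (sum_strict (j0 := o0)) => /=.
    + by move=> j; rewrite /Pp op (negbTE oq) => /andP[_ ->]; rewrite orbT.
    + by rewrite /Pp op.
    + by rewrite /Pp (negbTE oq).
    + exact: apos.
  - apply/orP; left; apply: (sum_strict (j0 := o0)) => /=.
    + by move=> j; rewrite /Pp oq (negbTE op) => /andP[_ ->]; rewrite orbT.
    + by rewrite /Pp oq.
    + by rewrite /Pp (negbTE op).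
    + exact: apos.
  - apply/orP; right; apply: (sum_strict (j0 := Ordinal pk)) => /=.
    + by move=> j; rewrite /Pp (negbTE op) (negbTE oq) => /andP[hj ->]; rewrite (ltn_trans h hj).
    + by rewrite /Pp (negbTE op) ltnSn /= op.
    + by rewrite /Pp (negbTE oq) ltnNge h.
    + exact: apos.
move=> p q e; apply: val_inj.
case: (ltngtP p q) => h //.
  by move: (key p q h); rewrite e eqxx.
by move: (key q p h); rewrite e eqxx.
Qed.

Lemma row_eig k (M : 'M[algC]_k) (x : 'I_k -> algC) (l : algC) :
  (forall i, \sum_j M i j * x j = l * x i) ->
  (\row_j x j) *m M^T = l *: \row_j x j.
Proof.
move=> H; apply/rowP => i; rewrite !mxE -H.
by apply: eq_bigr => j _; rewrite !mxE mulrC.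
Qed.

Lemma cp_tr k (M : 'M[algC]_k) : char_poly M^T = char_poly M.
Proof.
by rewrite /char_poly /char_poly_mx -det_tr raddfB /= tr_scalar_mx map_trmx trmxK.
Qed.

Theorem mainTheorem3 (k : nat) (alpha : 'I_k -> nat) :
  (2 <= k)%N -> ~~ odd k -> (forall i, (0 < alpha i)%N) ->
  exists lam : 'I_k -> algC, injective lam /\
    char_poly (QL alpha) = \prod_(i < k) ('X - (lam i)%:P).
Proof.
move=> k2 ek apos.
have k0 : (0 < k)%N by apply: leq_trans k2.
pose o0 := Ordinal k0.
pose lam (p : 'I_k) : algC := (lamN alpha p)%:R.
have lam_inj : injective lam.
  by move=> p q /eqP; rewrite /lam eqr_nat => /eqP /(lamN_inj ek apos).
have roots p : root (char_poly (QL alpha)) (lam p).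
  rewrite -cp_tr -eigenvalue_root_char; apply/eigenvalueP.
  have [p0|p0] := eqVneq (val p) 0%N.
    exists (\row_j (1:algC)).
      apply: row_eig => i; rewrite QL_row //.
      rewrite /lam /lamN p0 /= mul0r big1 // => j _; by rewrite subrr mulr0.
    by apply/eqP => /rowP/(_ o0); rewrite !mxE; apply/eqP; exact: oner_neq0.
  exists (\row_j xv alpha p j).
    apply: row_eig => i; rewrite QL_row // /lam lamN_C //; exact: eig_eq.
  apply/eqP => /rowP/(_ o0); rewrite !mxE /xv /= lt0n p0; apply/eqP.
  by rewrite pnatr_eq0 -lt0n.
exists lam; split => //.
rewrite (@all_roots_prod_XsubC _ (char_poly (QL alpha)) (map lam (enum 'I_k))).
- by rewrite (monicP (char_poly_monic _)) scale1r big_map big_enum.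
- by rewrite size_char_poly size_map size_enum_ord.
- by apply/allP => z /mapP [p _ ->].
- by rewrite uniq_rootsE map_inj_uniq ?enum_uniq.
Qed.
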